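(* For every $n\geq1$, $A_n(A_n^{n+1}-2A_n^n-2J_n)=0$.
   Context: For $\kappa\in(0,1/2)$, the paired tent map $T_\kappa:[-1,1]\to[-1,1]$ is $T_\kappa(x)=2(1+\kappa)(x+1)-1$ for $x\in[-1,-1/2]$, $T_\kappa(x)=-2(1+\kappa)x-1$ for $x\in[-1/2,0)$, $T_\kappa(0)=0$, $T_\kappa(x)=-2(1+\kappa)x+1$ for $x\in(0,1/2]$, $T_\kappa(x)=2(1+\kappa)(x-1)+1$ for $x\in[1/2,1]$. For $n\geq1$, $\kappa_n$ is the unique solution in $(0,1/2)$ of $(2+2\kappa)^n\kappa=1$, and $T_n=T_{\kappa_n}$. Let $r_0<\dots<r_{2n+4}$ enumerate increasingly the $2n+5$ distinct points of $\{-1,-1/2,0,1/2,1\}\cup\{T_n^i(\pm\kappa_n):0\le i\le n-1\}$ and $R_i=(r_{i-1},r_i)$. $A_n$ is the $(2n+4)\times(2n+4)$ matrix with $a_{ij}=1$ if $R_i\subset T_n(R_j)$ and $0$ otherwise. With $e_i$ the standard basis of $\mathbb C^{2n+4}$, $J_n$ is the permutation matrix with $J_ne_i=e_{2n+5-i}$. *)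

(* Defs.v *)
From HB Require Import structures.
From mathcomp Require Import all_boot all_order all_algebra.
From mathcomp Require Import boolp classical_sets reals set_interval.
Set Implicit Arguments. Unset Strict Implicit. Unset Printing Implicit Defensive.
Import Order.TTheory GRing.Theory Num.Theory.
Local Open Scope ring_scope.
Local Open Scope classical_set_scope.

Section PairedTent.
Variable R : realType.

(* the paired tent map T_kappa on [-1,1] (extended arbitrarily outside) *)
Definition tent (k : R) (x : R) : R :=
  if x <= - (1/2) then 2 * (1 + k) * (x + 1) - 1
  else if x < 0 then - (2 * (1 + k) * x) - 1
  else if x == 0 then 0
  else if x <= 1/2 then - (2 * (1 + k) * x) + 1
  else 2 * (1 + k) * (x - 1) + 1.

Definition kappa (n : nat) : R :=
  xget 0 [set k : R | 0 < k < 1/2 /\ (2 + 2 * k) ^+ n * k = 1].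

Definition Tn (n : nat) : R -> R := tent (kappa n).

Definition markov_pts (n : nat) : seq R :=
  [:: -1; - (1/2); 0; 1/2; 1]
  ++ [seq iter i (Tn n) (kappa n) | i <- iota 0 n]
  ++ [seq iter i (Tn n) (- kappa n) | i <- iota 0 n].

Definition rpts (n : nat) : seq R := sort <=%R (undup (markov_pts n)).
Definition r (n i : nat) : R := nth 0 (rpts n) i.

(* R_i = (r_{i-1}, r_i), i = 1..2n+4; 0-based index k stands for R_{k+1} *)
Definition Rint (n : nat) (k : nat) : set R := `](r n k), (r n k.+1)[.

Definition An (n : nat) : 'M[int]_(2 * n + 4) :=
  \matrix_(i, j) ((asbool (Rint n i `<=` Tn n @` Rint n j)) : nat)%:R.

End PairedTent.

(* J_n e_i = e_{2n+5-i}; 0-based: J k l = 1 iff k + l = 2n+3 *)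
Definition Jn (n : nat) : 'M[int]_(2 * n + 4) :=
  \matrix_(i, j) ((i + j == 2 * n + 3)%N : nat)%:R.

(* Main.v *)
Require Import Defs.
From HB Require Import structures.
From mathcomp Require Import all_boot all_order all_algebra.
From mathcomp Require Import boolp classical_sets reals.
From mathcomp Require Import set_interval zify lra ring.
Import GRing.Theory.
Local Open Scope ring_scope.

Module Comb.
Import GRing.Theory.

Definition ff n i := if (i < n)%N then i else n.+2.
Definition phi n i := if i == 0%N then 0%N else if (i < n)%N then ff n i.+1
  else if i == n then (n+3)%N else ff n 1.
Definition LOh n j := if (j < n)%N then phi n j else if j == n then ff n 1 else 0%N.
Definition HIh n j := if (j < n)%N then phi n j.+1 else if j == n then (n+3)%N else ff n 1.
Definition LO n j := if (j <= n+1)%N then LOh n j else (2*n+4 - HIh n (2*n+3 - j))%N.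
Definition HI n j := if (j <= n+1)%N then HIh n j else (2*n+4 - LOh n (2*n+3 - j))%N.
Definition Bm n : 'M[int]_(2*n+4) := \matrix_(i,j) ((LO n j <= i < HI n j)%N : nat)%:R.
Definition ind n (lo hi : nat) : 'cV[int]_(2*n+4) := \col_i ((lo <= i < hi)%N : nat)%:R.

Lemma mulJ_l n m (X : 'M[int]_(2*n+4, m)) i k :
  (Jn n *m X) i k = X (rev_ord i) k.
Proof.
rewrite mxE (bigD1 (rev_ord i)) //= big1 ?addr0.
  rewrite mxE /=. have -> : (i + (2 * n + 4 - i.+1) == 2 * n + 3)%N.
    by apply/eqP; have := ltn_ord i; lia.
  by rewrite mul1r.
move=> l hl; rewrite mxE.
have -> : (i + l == 2 * n + 3)%N = false.
  apply/eqP => h; move/eqP: hl; apply; apply/val_inj => /=; lia.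
by rewrite mul0r.
Qed.

Lemma mulJ_r n m (X : 'M[int]_(m, 2*n+4)) i k :
  (X *m Jn n) i k = X i (rev_ord k).
Proof.
rewrite mxE (bigD1 (rev_ord k)) //= big1 ?addr0.
  rewrite mxE /=. have -> : ((2 * n + 4 - k.+1) + k == 2 * n + 3)%N.
    by apply/eqP; have := ltn_ord k; lia.
  by rewrite mulr1.
move=> l hl; rewrite mxE.
have -> : (l + k == 2 * n + 3)%N = false.
  apply/eqP => h; move/eqP: hl; apply; apply/val_inj => /=; lia.
by rewrite mulr0.
Qed.

Lemma BJ n : Bm n *m Jn n = Jn n *m Bm n.
Proof.
apply/matrixP => i k; rewrite mulJ_l mulJ_r !mxE /=.
have hi := ltn_ord i; have hk := ltn_ord k.
congr ((nat_of_bool _)%:R).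
rewrite /LO /HI.
have -> : (2 * n + 4 - k.+1 = 2 * n + 3 - k)%N by lia.
have -> : (2 * n + 3 - (2 * n + 3 - k) = k)%N by lia.
case: ifP; case: ifP => h1 h2; lia.
Qed.

Lemma JJ n : Jn n *m Jn n = 1%:M.
Proof.
apply/matrixP => i k; rewrite mulJ_l !mxE /=.
have hi := ltn_ord i; have hk := ltn_ord k.
have -> : (2 * n + 4 - i.+1 + k == 2 * n + 3)%N = (i == k).
  apply/eqP/eqP => h; first by apply/val_inj => /=; lia.
  by rewrite h; lia.
by case: (i == k).
Qed.

Lemma indE n lo hi (i : 'I_(2*n+4)) z : ind n lo hi i z = ((lo <= i < hi)%N : nat)%:R.
Proof. by rewrite mxE. Qed.

Lemma ind_delta n j (hj : (j < 2*n+4)%N) : ind n j j.+1 = delta_mx (@Ordinal _ j hj) 0.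
Proof.
apply/matrixP => i z; rewrite !mxE; rewrite [z]ord1 eqxx andbT.
have -> : (j <= i < j.+1)%N = (i == @Ordinal _ j hj).
  apply/idP/eqP => h; first by apply/val_inj => /=; lia.
  by rewrite h /=; lia.
by case: (i == _).
Qed.

Lemma A_ind1 n j : (j < 2*n+4)%N -> Bm n *m ind n j j.+1 = ind n (LO n j) (HI n j).
Proof.
move=> hj; rewrite (@ind_delta n j hj) -colE.
by apply/matrixP => i z; rewrite !mxE.
Qed.

Lemma J_ind n a b : Jn n *m ind n a b = ind n (2*n+4-b) (2*n+4-a).
Proof.
apply/matrixP => i z; rewrite mulJ_l !mxE /=.
have := ltn_ord i => hi.
congr ((nat_of_bool _)%:R); lia.
Qed.

Lemma ind_cat n a b c : (a <= b <= c)%N -> ind n a c = ind n a b + ind n b c.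
Proof. move=> h; apply/matrixP => i z; rewrite !mxE; lia. Qed.

Lemma PS n m (v : 'cV[int]_(2*n+4)) : Bm n ^+ m.+1 *m v = Bm n *m (Bm n ^+ m *m v).
Proof. by rewrite exprS -mulmxE mulmxA. Qed.

Lemma PD n m k (v : 'cV[int]_(2*n+4)) : Bm n ^+ (m + k) *m v = Bm n ^+ m *m (Bm n ^+ k *m v).
Proof. by rewrite exprD -mulmxE mulmxA. Qed.

Lemma PJ n m (v : 'cV[int]_(2*n+4)) : Bm n ^+ m *m (Jn n *m v) = Jn n *m (Bm n ^+ m *m v).
Proof.
elim: m v => [|m IH] v; first by rewrite expr0 !mul1mx.
by rewrite !PS IH !mulmxA BJ.
Qed.

Lemma final_from_cols n :
  (forall j : 'I_(2*n+4), Bm n ^+ n.+1 *m (Bm n *m delta_mx j (0:'I_1) - 2%:R *: delta_mx j (0:'I_1))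
      = 2%:R *: (Jn n *m (Bm n *m delta_mx j (0:'I_1)))) ->
  Bm n *m (Bm n ^+ n.+1 - 2%:R *: Bm n ^+ n - 2%:R *: Jn n) = 0.
Proof.
move=> H; apply/matrixP => i j.
have -> : forall X : 'M[int]_(2*n+4), X i j = (X *m delta_mx j (0:'I_1)) i 0.
  by move=> X; rewrite -colE mxE.
rewrite -!mulmxA mulmxBl mulmxBr !mulmxBl -!scalemxAl !mulmxBr -!scalemxAr.
rewrite !mulmxA BJ -!mulmxA.
have -> : Bm n *m (Bm n ^+ n.+1 *m delta_mx j (0:'I_1)) = Bm n ^+ n.+1 *m (Bm n *m delta_mx j (0:'I_1)).
  by rewrite !mulmxA !mulmxE -exprS -exprSr.
have -> : Bm n *m (Bm n ^+ n *m delta_mx j (0:'I_1)) = Bm n ^+ n.+1 *m delta_mx j (0:'I_1).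
  by rewrite PS.
rewrite [2%:R *: (Bm n ^+ n.+1 *m _)]scalemxAr -mulmxBr H subrr.
by rewrite !mxE.
Qed.

Ltac lohi := rewrite /LO /HI /LOh /HIh /phi /ff; repeat (case: ifP => ?); lia.

Section S3.
Variable n : nat.
Hypothesis n3 : (3 <= n)%N.
Local Notation A := (Bm n).
Local Notation J := (Jn n).
Local Notation ind a b := (ind n a%N b%N).
Local Notation N := (2*n+4)%N.

Lemma C0 : A *m ind 0 1 = ind 0 2.
Proof. rewrite A_ind1; last lia. have -> : LO n 0 = 0%N by lohi. by have -> : HI n 0 = 2%N by lohi. Qed.
Lemma C1 i : (1 <= i <= n - 3)%N -> A *m ind i i.+1 = ind i.+1 i.+2.
Proof. move=> h; rewrite A_ind1; last lia. have -> : LO n i = i.+1 by lohi. by have -> : HI n i = i.+2 by lohi. Qed.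
Lemma C2 : A *m ind (n-2) (n-2).+1 = ind (n-1) (n+2).
Proof. rewrite A_ind1; last lia. have -> : LO n (n-2) = (n-1)%N by lohi. by have -> : HI n (n-2) = (n+2)%N by lohi. Qed.
Lemma C3 : A *m ind (n-1) (n-1).+1 = ind (n+2) (n+3).
Proof. rewrite A_ind1; last lia. have -> : LO n (n-1) = (n+2)%N by lohi. by have -> : HI n (n-1) = (n+3)%N by lohi. Qed.
Lemma C4 : A *m ind n n.+1 = ind 1 (n+3).
Proof. rewrite A_ind1; last lia. have -> : LO n n = 1%N by lohi. by have -> : HI n n = (n+3)%N by lohi. Qed.
Lemma C5 : A *m ind (n+1) (n+1).+1 = ind 0 1.
Proof. rewrite A_ind1; last lia. have -> : LO n (n+1) = 0%N by lohi. by have -> : HI n (n+1) = 1%N by lohi. Qed.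

Ltac pw := apply/matrixP => ? ?; rewrite !mxE; lia.

Lemma ind_eq a b a' b' : a = a' -> b = b' -> ind a b = ind a' b'.
Proof. by move=> -> ->. Qed.

Lemma Amir a b : A *m ind (N-b) (N-a) = J *m (A *m ind a b).
Proof. by rewrite -J_ind mulmxA BJ mulmxA. Qed.

Lemma A1 m : m.+1 = m.+1. Proof. by []. Qed.

Lemma D1 m : (m <= n - 3)%N -> A *m ind 0 m.+1 = ind 0 m.+2.
Proof.
elim: m => [|m IH] h; first exact: C0.
rewrite (@ind_cat n 0 m.+1 m.+2) ?mulmxDr ?IH ?C1; try lia.
pw.
Qed.

Lemma Sn1 : A *m ind 0 (n-1) = ind 0 (n+2).
Proof.
rewrite (@ind_cat n 0 (n-2) (n-1)) ?mulmxDr; last lia.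
have -> : (n - 2 = (n-3).+1)%N by lia.
rewrite D1 //. have -> : ((n-3).+1 = n-2)%N by lia.
have -> : (n - 1 = (n-2).+1)%N by lia.
rewrite C2; pw.
Qed.

Lemma Sn2 : A *m ind 0 (n+2) = 2%:R *: ind 0 (n+3).
Proof.
rewrite (@ind_cat n 0 (n-1) (n+2)) ?mulmxDr; last lia.
rewrite (@ind_cat n (n-1) n (n+2)) ?mulmxDr; last lia.
rewrite (@ind_cat n n (n+1) (n+2)) ?mulmxDr; last lia.
rewrite Sn1.
have -> : ind (n-1) n = ind (n-1) (n-1).+1 by apply: ind_eq; lia.
have -> : ind (n+1) (n+2) = ind (n+1) (n+1).+1 by apply: ind_eq; lia.
have -> : ind n (n+1) = ind n n.+1 by rewrite addn1.
rewrite C3 C5 C4.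
pw.
Qed.

Lemma Ee : A *m ind (n+2) (n+3) = ind (N-1) N.
Proof.
have -> : ind (n+2) (n+3) = ind (N - (n+1).+1) (N - (n+1)) by apply: ind_eq; lia.
rewrite Amir C5 J_ind; apply: ind_eq; lia.
Qed.

Lemma Ef : A *m ind (N-1) N = ind (N-2) N.
Proof.
have -> : ind (N-1) N = ind (N - 1) (N - 0) by apply: ind_eq; lia.
rewrite Amir C0 J_ind; apply: ind_eq; lia.
Qed.

Lemma Sn3 : A *m ind 0 (n+3) = 2%:R *: ind 0 (n+3) + ind (N-1) N.
Proof.
rewrite (@ind_cat n 0 (n+2) (n+3)) ?mulmxDr; last lia.
by rewrite Sn2 Ee; pw.
Qed.

Lemma AM : A *m ind (n-1) (n+2) = ind 0 (n+3) + ind (n+2) (n+3).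
Proof.
rewrite (@ind_cat n (n-1) n (n+2)) ?mulmxDr; last lia.
rewrite (@ind_cat n n (n+1) (n+2)) ?mulmxDr; last lia.
have -> : ind (n-1) n = ind (n-1) (n-1).+1 by apply: ind_eq; lia.
have -> : ind (n+1) (n+2) = ind (n+1) (n+1).+1 by apply: ind_eq; lia.
have -> : ind n (n+1) = ind n n.+1 by rewrite addn1.
rewrite C3 C5 C4.
pw.
Qed.

Lemma Sg m : (m <= n - 2)%N -> A ^+ m *m ind 0 1 = ind 0 m.+1.
Proof.
elim: m => [|m IH] h; first by rewrite expr0 mul1mx.
by rewrite PS IH ?D1 //; lia.
Qed.

Lemma Sg1 : A ^+ (n-1) *m ind 0 1 = ind 0 (n+2).
Proof.
have -> : (n - 1 = (n-2).+1)%N by lia.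
rewrite PS Sg //. have -> : ((n-2).+1 = n-1)%N by lia.
exact: Sn1.
Qed.

Lemma Shift i m : (1 <= i)%N -> (i + m <= n - 2)%N -> A ^+ m *m ind i i.+1 = ind (i+m) (i+m).+1.
Proof.
move=> h1; elim: m => [|m IH] h; first by rewrite expr0 mul1mx addn0.
rewrite PS IH ?C1; try lia.
by apply: ind_eq; lia.
Qed.

Lemma Hc m : (m <= n - 3)%N -> A ^+ m *m (ind 1 2 - ind 0 1) = ind (m+1) (m+2) - ind 0 (m+1).
Proof.
elim: m => [|m IH] h; first by rewrite expr0 mul1mx.
rewrite PS IH ?mulmxBr; last lia.
have -> : ind (m+1) (m+2) = ind (m.+1) (m.+1).+1 by apply: ind_eq; lia.
rewrite C1 ?addn1 ?D1; try lia.
by apply/matrixP => ? ?; rewrite !mxE; lia.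
Qed.

Lemma Hn : A ^+ (n-1) *m (ind 1 2 - ind 0 1) = 2%:R *: ind (n+2) (n+3).
Proof.
have -> : (n - 1 = ((n-3).+1).+1)%N by lia.
rewrite !PS Hc // mulmxBr.
have -> : ind (n-3+1) (n-3+2) = ind (n-2) (n-2).+1 by apply: ind_eq; lia.
have -> : ind 0 (n-3+1) = ind 0 (n-3).+1 by apply: ind_eq; lia.
rewrite C2 D1 //.
have -> : ind 0 (n-3).+2 = ind 0 (n-1) by apply: ind_eq; lia.
rewrite mulmxBr AM Sn1.
pw.
Qed.


Lemma PSr m (v : 'cV[int]_(2*n+4)) : A ^+ m.+1 *m v = A ^+ m *m (A *m v).
Proof. by rewrite exprSr -mulmxE mulmxA. Qed.

Lemma JA (v : 'cV[int]_(2*n+4)) : J *m (A *m v) = A *m (J *m v).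
Proof. by rewrite !mulmxA BJ. Qed.

Definition claim j := A ^+ n.+1 *m (A *m ind j j.+1 - 2%:R *: ind j j.+1)
   = 2%:R *: (J *m (A *m ind j j.+1)).

Lemma col0 : claim 0.
Proof.
rewrite /claim C0.
have -> : ind 0 2 - 2%:R *: ind 0 1 = ind 1 2 - ind 0 1 by pw.
rewrite (_ : n.+1 = (2 + (n-1))%N); last lia.
rewrite PD Hn !PS expr0 mul1mx -!scalemxAr Ee Ef J_ind.
pw.
Qed.

Lemma W : A ^+ 3 *m (ind (n-1) (n+2) - 2%:R *: ind (n-2) (n-2).+1) = 2%:R *: (J *m ind 1 2).
Proof.
have s1 : A *m (ind (n-1) (n+2) - 2%:R *: ind (n-2) (n-2).+1)
   = ind 0 (n+3) + ind (n+2) (n+3) - 2%:R *: ind (n-1) (n+2).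
  by rewrite mulmxBr -scalemxAr AM C2.
have s2 : A *m (ind 0 (n+3) + ind (n+2) (n+3) - 2%:R *: ind (n-1) (n+2))
   = 2%:R *: ind (N-1) N - 2%:R *: ind (n+2) (n+3).
  rewrite mulmxBr mulmxDr -scalemxAr AM Sn3 Ee; pw.
have s3 : A *m (2%:R *: ind (N-1) N - 2%:R *: ind (n+2) (n+3)) = 2%:R *: (J *m ind 1 2).
  rewrite mulmxBr -!scalemxAr Ee Ef J_ind; pw.
by rewrite !PS expr0 mul1mx s1 s2 s3.
Qed.

Lemma colmid i : (1 <= i <= n - 2)%N -> claim i.
Proof.
move=> hi.
have st1 : A ^+ (n - 2 - i) *m (A *m ind i i.+1 - 2%:R *: ind i i.+1)
    = ind (n-1) (n+2) - 2%:R *: ind (n-2) (n-2).+1.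
  case: (ltnP i (n-2)) => h.
    have -> : (n - 2 - i = (n - 3 - i).+1)%N by lia.
    rewrite PS C1; last lia.
    rewrite mulmxBr -scalemxAr !Shift; try lia.
    have -> : ind (i.+1 + (n - 3 - i)) (i.+1 + (n - 3 - i)).+1 = ind (n-2) (n-2).+1 by apply: ind_eq; lia.
    have -> : ind (i + (n - 3 - i)) (i + (n - 3 - i)).+1 = ind (n-3) (n-3).+1 by apply: ind_eq; lia.
    by rewrite mulmxBr -scalemxAr C2 C1 //; try lia; have -> : ((n-3).+1 = n-2)%N by lia.
  have -> : i = (n-2)%N by lia.
  by rewrite subnn expr0 mul1mx C2.
rewrite /claim (_ : n.+1 = (1 + ((i-1) + (3 + (n - 2 - i))))%N); last lia.
rewrite !PD st1 W -scalemxAr PJ Shift; try lia.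
rewrite expr1 JA.
by rewrite -scalemxAr; have -> : (1 + (i - 1) = i)%N by lia.
Qed.

Lemma coln1 : claim (n-1).
Proof.
rewrite /claim C3 (_ : n.+1 = ((n-1) + 2)%N); last lia.
rewrite PD !PS expr0 mul1mx mulmxBr -scalemxAr C3 Ee mulmxBr -scalemxAr Ee Ef.
have -> : ind (N-2) N - 2%:R *: ind (N-1) N = J *m (ind 1 2 - ind 0 1).
  rewrite mulmxBr !J_ind; pw.
by rewrite PJ Hn -scalemxAr.
Qed.

Lemma coln : claim n.
Proof.
rewrite /claim C4.
have e1 : A *m (ind 1 (n+3) - 2%:R *: ind n n.+1) = J *m ind 0 1 - (ind 1 2 - ind 0 1).
  have -> : ind 1 (n+3) = ind 0 (n+3) - ind 0 1 by pw.
  rewrite !mulmxBr -scalemxAr C4 Sn3 C0 J_ind; pw.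
rewrite [X in A ^+ X *m _](_ : n.+1 = (1 + ((n-1) + 1))%N); last lia.
rewrite !PD expr1 e1 mulmxBr PJ Sg1 Hn mulmxBr -scalemxAr Ee -JA Sn2 -scalemxAr !J_ind; pw.
Qed.

Lemma colnp1 : claim (n+1).
Proof.
rewrite /claim C5 mulmxBr -scalemxAr [X in _ - 2%:R *: X]PSr C5.
have e1 : A ^+ n *m ind 0 1 = 2%:R *: ind 0 (n+3).
  have -> : A ^+ n = A ^+ (n-1).+1 by congr (_ ^+ _); lia.
  by rewrite PS Sg1 Sn2.
have e2 : A ^+ n.+1 *m ind 0 1 = 2%:R *: (2%:R *: ind 0 (n+3) + ind (N-1) N).
  by rewrite PS e1 -scalemxAr Sn3.
rewrite e1 e2 J_ind; pw.
Qed.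

Lemma colhalf j : (j <= n+1)%N -> claim j.
Proof.
move=> hj.
case: (posnP j) => [->|h0]; first exact: col0.
case: (leqP j (n-2)) => h1; first by apply: colmid; lia.
case: (eqVneq j (n-1)%N) => [->|h2]; first exact: coln1.
case: (eqVneq j n) => [->|h3]; first exact: coln.
have -> : j = (n+1)%N by lia.
exact: colnp1.
Qed.

End S3.

Definition colf n (f : nat -> int) : 'cV[int]_(2*n+4) := \col_i f i.
Definition mvf n (f : nat -> int) (i : nat) : int :=
  foldr (fun j acc => (if (LO n j <= i < HI n j)%N then f j else 0) + acc) 0 (iota 0 (2*n+4)).

Lemma foldr_sum (F : nat -> int) s : foldr (fun j acc => F j + acc) 0 s = \sum_(j <- s) F j.
Proof. by elim: s => [|a s IH]; rewrite ?big_nil ?big_cons //= IH. Qed.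

Lemma A_colf n f : Bm n *m colf n f = colf n (mvf n f).
Proof.
apply/matrixP => i z; rewrite !mxE /mvf foldr_sum.
have -> : iota 0 (2*n+4) = index_iota 0 (2*n+4) by rewrite /index_iota subn0.
rewrite big_mkord; apply: eq_bigr => j _; rewrite !mxE.
by case: ifP => _; rewrite ?mul1r ?mul0r.
Qed.

Lemma P_colf n m f : Bm n ^+ m *m colf n f = colf n (iter m (mvf n) f).
Proof.
elim: m => [|m IH]; first by rewrite expr0 mul1mx.
by rewrite PS IH A_colf.
Qed.

Lemma J_colf n f : Jn n *m colf n f = colf n (fun i => f (2*n+3-i)%N).
Proof.
apply/matrixP => i z; rewrite mulJ_l !mxE /=.
by congr f; have := ltn_ord i; lia.
Qed.

Definition chk n j : bool :=
  let e := fun i : nat => ((j <= i < j.+1)%N : nat)%:R : int in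
  let v := mvf n e in
  all (fun i => iter n.+1 (mvf n) (fun t => v t - 2%:R * e t) i == 2%:R * v (2*n+3-i)%N)
    (iota 0 (2*n+4)).

Lemma chk_claim n j : chk n j -> claim n j.
Proof.
move=> /allP H; rewrite /claim.
have -> : ind n j j.+1 = colf n (fun i => ((j <= i < j.+1)%N : nat)%:R).
  by apply/matrixP => i z; rewrite !mxE.
rewrite A_colf J_colf.
have -> : forall f g, colf n f - 2%:R *: colf n g = colf n (fun t => f t - 2%:R * g t).
  by move=> f g; apply/matrixP => i z; rewrite !mxE.
rewrite P_colf; apply/matrixP => i z; rewrite !mxE.
apply/eqP; apply: H; rewrite mem_iota /=; have := ltn_ord i; lia.
Qed.

Lemma chk1 : all (chk 1) (iota 0 3).
Proof. by vm_compute. Qed.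
Lemma chk2 : all (chk 2) (iota 0 4).
Proof. by vm_compute. Qed.

Lemma claim_sym n j : (j < 2*n+4)%N -> claim n j -> claim n (2*n+3-j).
Proof.
rewrite /claim => hj H.
have -> : ind n (2*n+3-j) (2*n+3-j).+1 = Jn n *m ind n j j.+1.
  by rewrite J_ind; apply: ind_eq; lia.
have AJ : forall v : 'cV[int]_(2*n+4), Bm n *m (Jn n *m v) = Jn n *m (Bm n *m v).
  by move=> v; rewrite !mulmxA BJ.
rewrite AJ scalemxAr -mulmxBr PJ H -scalemxAr !mulmxA JJ !mul1mx.
done.
Qed.

Lemma claim_all n : (forall j, (j <= n+1)%N -> claim n j) ->
  forall j, (j < 2*n+4)%N -> claim n j.
Proof.
move=> H j hj; case: (leqP j (n+1)) => h; first exact: H.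
have -> : j = (2*n+3 - (2*n+3-j))%N by lia.
apply: claim_sym; [lia | apply: H; lia].
Qed.

Theorem B_identity n : (1 <= n)%N ->
  Bm n *m (Bm n ^+ n.+1 - 2%:R *: Bm n ^+ n - 2%:R *: Jn n) = 0.
Proof.
move=> hn; apply: final_from_cols => j.
have Hc : forall j, (j <= n+1)%N -> claim n j.
  case: (leqP 3 n) => h3; first by move=> k hk; apply: colhalf.
  have [->|->] : n = 1%N \/ n = 2%N by lia.
    by move=> k hk; apply: chk_claim; move/allP: chk1; apply; rewrite mem_iota; lia.
  by move=> k hk; apply: chk_claim; move/allP: chk2; apply; rewrite mem_iota; lia.
have := @claim_all n Hc j (ltn_ord j); rewrite /claim.
by rewrite (@ind_delta n j (ltn_ord j)); have -> : @Ordinal _ j (ltn_ord j) = j by apply: val_inj.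
Qed.

End Comb.

Module Ana.
Import Comb.
Import Order.TTheory GRing.Theory Num.Theory.
Local Open Scope ring_scope.
Local Open Scope classical_set_scope.
Set Implicit Arguments. Unset Strict Implicit.

Lemma kappa_spec (R : realType) n : (1 <= n)%N ->
  0 < kappa R n < 1/2 /\ (2 + 2 * kappa R n) ^+ n * kappa R n = 1.
Proof.
move=> hn; rewrite /kappa; apply: (@xgetPex _ 0 [set k : R | 0 < k < 1/2 /\ (2 + 2 * k) ^+ n * k = 1]).
pose p : {poly R} := (2%:P + 2%:P * 'X) ^+ n * 'X - 1.
have pE : forall x, p.[x] = (2 + 2 * x) ^+ n * x - 1.
  by move=> x; rewrite /p !hornerE.
have h3 : (3 : R) <= 3 ^+ n.
  by rewrite -[X in X <= _]expr1 ler_eXn2l //; lra.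
have [x /andP[x0 x1] rx] : exists2 x, 0 <= x <= 1/2 & root p x.
  apply: poly_ivt; first lra.
  rewrite !pE mulr0 /=; apply/andP; split; first lra.
  have -> : 2 + 2 * (1/2 : R) = 3 by field.
  lra.
move/rootP: rx; rewrite pE => /eqP; rewrite subr_eq0 => /eqP hx.
exists x; split => //.
apply/andP; split.
  rewrite lt_neqAle x0 andbT; apply/eqP => h; move: hx; rewrite -h mulr0; lra.
rewrite lt_neqAle x1 andbT; apply/eqP => h; move: hx; rewrite h.
have -> : 2 + 2 * (1/2 : R) = 3 by field.
lra.
Qed.

Section T.
Variable R : realType.
Implicit Types (k x : R).

Lemma T1 k x : x <= -(1/2) -> tent k x = 2 * (1 + k) * x + (2 * (1 + k) - 1).
Proof. by move=> h; rewrite /tent h; ring. Qed.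
Lemma T2 k x : -(1/2) < x -> x < 0 -> tent k x = - (2 * (1 + k) * x) - 1.
Proof.
move=> h1 h2; rewrite /tent.
case: ifP => ha; first lra.
by rewrite h2.
Qed.
Lemma T3 k x : 0 < x -> x <= 1/2 -> tent k x = - (2 * (1 + k) * x) + 1.
Proof.
move=> h1 h2; rewrite /tent.
case: ifP => ha; first lra.
case: ifP => hb; first lra.
case: ifP => hc; first by move/eqP: hc => hc; lra.
by rewrite h2.
Qed.
Lemma T4 k x : 1/2 < x -> tent k x = 2 * (1 + k) * x + (1 - 2 * (1 + k)).
Proof.
move=> h1; rewrite /tent.
case: ifP => ha; first lra.
case: ifP => hb; first lra.
case: ifP => hc; first by move/eqP: hc => hc; lra.
case: ifP => hd; first lra.
ring.
Qed.
Lemma T0 k : tent k 0 = 0.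
Proof.
rewrite /tent; case: ifP => ha; first lra.
by rewrite ltxx eqxx.
Qed.

Lemma tent_odd k x : tent k (- x) = - tent k x.
Proof.
case: (ltrgtP x (-(1/2))) => h1.
- rewrite (@T4 k (-x)); try lra; rewrite (@T1 k x); try lra; ring.
- case: (ltrgtP x 0) => h2.
  + rewrite (@T3 k (-x)); try lra; rewrite (@T2 k x); try lra; ring.
  + case: (ltrgtP x (1/2)) => h3.
    * rewrite (@T2 k (-x)); try lra; rewrite (@T3 k x); try lra; ring.
    * rewrite (@T1 k (-x)); try lra; rewrite (@T4 k x); try lra; ring.
    * rewrite h3 (@T1 k (-(1/2))); try lra; rewrite (@T3 k (1/2)); try lra; ring.
  + by rewrite h2 oppr0 T0 oppr0.
- rewrite h1 opprK (@T3 k (1/2)); try lra; rewrite (@T1 k (-(1/2))); try lra; ring.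
Qed.

Lemma iter_odd k i x : iter i (tent k) (- x) = - iter i (tent k) x.
Proof. by elim: i => [|i IH] //=; rewrite IH tent_odd. Qed.
End T.

Section A.
Variable R : realType.
Variable n : nat.
Hypothesis n1 : (1 <= n)%N.
Local Notation k := (kappa R n).
Local Notation c := (2 * (1 + kappa R n)).

Lemma kpos : 0 < k. Proof. by case: (@kappa_spec R n n1) => /andP[]. Qed.
Lemma khalf : k < 1/2. Proof. by case: (@kappa_spec R n n1) => /andP[]. Qed.
Lemma ceq : c ^+ n * k = 1.
Proof. case: (@kappa_spec R n n1) => _; by have -> : c = 2 + 2 * k by ring. Qed.
Lemma c2 : 2 < c. Proof. have := kpos; lra. Qed.
Lemma cpos : 0 < c. Proof. have := c2; lra. Qed.

Lemma ck_lt i j : (i < j)%N -> c ^+ i * k < c ^+ j * k.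
Proof.
move=> h; rewrite ltr_pM2r ?kpos // ltr_eXn2l //; have := c2; lra.
Qed.

Lemma ck_last : c ^+ n.-1 * k < 1/2.
Proof.
have e : c * (c ^+ n.-1 * k) = 1 by rewrite mulrA -exprS prednK // ceq.
have := c2; have := cpos => h1 h2.
have hp : 0 < c ^+ n.-1 * k by rewrite mulr_gt0 ?exprn_gt0 ?cpos ?kpos.
nra.
Qed.

Lemma ck_small i : (i < n)%N -> c ^+ i * k < 1/2.
Proof.
move=> h; case: (ltnP i n.-1) => h'; last first.
  have -> : i = n.-1 by lia. exact: ck_last.
by have := ck_lt h'; have := ck_last; lra.
Qed.

Definition rneg i : R := if i == 0%N then -1 else if (i < n)%N then c ^+ i * k - 1
  else if i == n then -(1/2) else if i == n.+1 then - k else 0.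
Definition rr i : R := if (i <= n.+2)%N then rneg i else - rneg (2*n+4 - i)%N.

Lemma rneg_step i : (i <= n.+1)%N -> rneg i < rneg i.+1.
Proof.
move=> hi; rewrite /rneg /=.
have kp := kpos; have kh := khalf.
case: (posnP i) => [->|i0] /=.
  case: ifP => h1.
    have := ck_lt (ltn0Sn 0); rewrite expr0 mul1r; lra.
  have -> : (1 == n) = true by apply/eqP; lia.
  lra.
case: (ltnP i.+1 n) => h1.
  rewrite (_ : (i < n)%N = true) ?h1; last lia.
  have := ck_lt (ltnSn i); lra.
case: (eqVneq i.+1 n) => [e|ne].
  rewrite (_ : (i < n)%N = true) ?(_ : (i.+1 < n)%N = false) ?e ?eqxx; try lia.
  have := @ck_small i (ltac:(lia)); lra.
rewrite (_ : (i < n)%N = false) ?(_ : (i.+1 < n)%N = false) ?(_ : (i.+1 == n) = false); try lia.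
case: (eqVneq i n) => [e|ne2].
  by rewrite e eqxx; lra.
have -> : i = n.+1 by lia.
rewrite eqxx (_ : (n.+2 == n.+1) = false) ?(_ : (n.+1 == n) = false); try lia.
lra.
Qed.

Lemma rneg0 : rneg (n.+2) = 0.
Proof. by rewrite /rneg !ifF //; lia. Qed.

Lemma rr_lo i : (i <= n.+2)%N -> rr i = rneg i.
Proof. by move=> h; rewrite /rr h. Qed.

Lemma rr_hi i : (n.+2 <= i)%N -> rr i = - rneg (2*n+4 - i)%N.
Proof.
move=> h; rewrite /rr; case: ifP => h2 //.
have -> : i = n.+2 by lia.
have -> : (2*n+4 - n.+2 = n.+2)%N by lia.
by rewrite rneg0 oppr0.
Qed.

Lemma rr_step i : (i < 2*n+4)%N -> rr i < rr i.+1.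
Proof.
move=> h; case: (leqP i.+1 n.+2) => h1.
  rewrite !rr_lo; try lia; apply: rneg_step; lia.
rewrite !rr_hi; try lia.
rewrite ltrN2.
have -> : (2*n+4 - i = (2*n+4 - i.+1).+1)%N by lia.
apply: rneg_step; lia.
Qed.

Lemma rr_lt i j : (i < j)%N -> (j <= 2*n+4)%N -> rr i < rr j.
Proof.
move=> hij; elim: j hij => [//|j IH] hij hj.
case: (ltnP i j) => h.
  by apply: lt_trans (IH h _) (rr_step _); lia.
have -> : i = j by lia.
apply: rr_step; lia.
Qed.

Lemma rr_le i j : (i <= j)%N -> (j <= 2*n+4)%N -> rr i <= rr j.
Proof.
move=> hij hj; case: (ltnP i j) => h; first by apply/ltW/rr_lt.
by have -> : i = j by lia.
Qed.

Lemma rr_sym i : (i <= 2*n+4)%N -> rr (2*n+4 - i)%N = - rr i.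
Proof.
move=> h; case: (leqP i n.+2) => h1.
  rewrite rr_hi; last lia. rewrite rr_lo //.
  by have -> : (2*n+4 - (2*n+4 - i) = i)%N by lia.
rewrite rr_lo; last lia. rewrite rr_hi; last lia. by rewrite opprK.
Qed.

Lemma rr0 : rr 0 = -1. Proof. by rewrite rr_lo. Qed.
Lemma rr_mid i : (1 <= i < n)%N -> rr i = c ^+ i * k - 1.
Proof.
move=> h; rewrite rr_lo; last lia. rewrite /rneg.
have -> : (i == 0%N) = false by lia.
by have -> : (i < n)%N = true by lia.
Qed.
Lemma rr_n : rr n = -(1/2).
Proof.
rewrite rr_lo; last lia. rewrite /rneg.
have -> : (n == 0%N) = false by lia.
by rewrite ltnn eqxx.
Qed.
Lemma rr_n1 : rr n.+1 = - k.
Proof.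
rewrite rr_lo; last lia. rewrite /rneg.
have -> : (n.+1 == 0%N) = false by lia.
have -> : (n.+1 < n)%N = false by lia.
have -> : (n.+1 == n) = false by lia.
by rewrite eqxx.
Qed.
Lemma rr_n2 : rr n.+2 = 0.
Proof. by rewrite rr_lo ?rneg0. Qed.
Lemma rr_n3 : rr n.+3 = k.
Proof.
rewrite rr_hi; last lia. have -> : (2*n+4 - n.+3 = n.+1)%N by lia.
by rewrite -rr_lo ?rr_n1 ?opprK.
Qed.
Lemma rr_n4 : rr n.+4 = 1/2.
Proof.
rewrite rr_hi; last lia. have -> : (2*n+4 - n.+4 = n)%N by lia.
by rewrite -rr_lo ?rr_n ?opprK //; lia.
Qed.
Lemma rr_top : rr (2*n+4)%N = 1.
Proof. by rewrite -[X in rr X]subn0 rr_sym // rr0 opprK. Qed.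
Lemma rr_midhi i : (1 <= i < n)%N -> rr (2*n+4 - i)%N = 1 - c ^+ i * k.
Proof. move=> h; rewrite rr_sym ?rr_mid //; try lia. by rewrite opprB. Qed.

Lemma rr_ff i : (1 <= i <= n)%N -> rr (ff n i) = c ^+ i * k - 1.
Proof.
move=> h; rewrite /ff; case: ifP => h2; first by apply: rr_mid; lia.
have -> : i = n by lia.
by rewrite rr_n2 ceq subrr.
Qed.

Lemma TnE : @Tn R n = tent k. Proof. by []. Qed.

Lemma iterk i : (1 <= i < n)%N -> iter i (@Tn R n) k = 1 - c ^+ i * k.
Proof.
elim: i => [//|i IH] h.
have kp := kpos; have kh := khalf.
case: (posnP i) => [->|i0].
  rewrite /= TnE (@T3 R k k); try lra.
rewrite iterS IH; last lia.
have := @ck_small i (ltac:(lia)) => hs.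
rewrite TnE (@T4 R k); try lra. rewrite exprS; ring.
Qed.

Lemma iterk_neg i : (1 <= i < n)%N -> iter i (@Tn R n) (- k) = c ^+ i * k - 1.
Proof. by move=> h; rewrite TnE iter_odd -TnE iterk // opprB. Qed.

Lemma mp_in_rr x : x \in markov_pts R n -> exists2 i, (i <= 2*n+4)%N & rr i = x.
Proof.
rewrite /markov_pts !mem_cat !inE => /orP[|/orP[]].
- move=> /orP[/eqP->|/orP[/eqP->|/orP[/eqP->|/orP[/eqP->|/eqP->]]]].
  + by exists 0%N; rewrite ?rr0.
  + by exists n; rewrite ?rr_n //; lia.
  + by exists n.+2; rewrite ?rr_n2 //; lia.
  + by exists n.+4; rewrite ?rr_n4 //; lia.
  + by exists (2*n+4)%N; rewrite ?rr_top.
- move=> /mapP[i]; rewrite mem_iota => hi ->.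
  case: (posnP i) => [->|i0]; first by exists n.+3; rewrite ?rr_n3 //; lia.
  exists (2*n+4-i)%N; first lia.
  by rewrite rr_midhi ?iterk //; lia.
- move=> /mapP[i]; rewrite mem_iota => hi ->.
  case: (posnP i) => [->|i0]; first by exists n.+1; rewrite ?rr_n1 //; lia.
  exists i; first lia.
  by rewrite rr_mid ?iterk_neg //; lia.
Qed.

Lemma rr_in_mp i : (i <= 2*n+4)%N -> rr i \in markov_pts R n.
Proof.
move=> hi; rewrite /markov_pts !mem_cat.
have inK : forall j, (j < n)%N -> iter j (@Tn R n) k \in [seq iter i (@Tn R n) k | i <- iota 0 n].
  by move=> j hj; apply: map_f; rewrite mem_iota; lia.
have inKN : forall j, (j < n)%N -> iter j (@Tn R n) (- k) \in [seq iter i (@Tn R n) (- k) | i <- iota 0 n].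
  by move=> j hj; apply: map_f; rewrite mem_iota; lia.
case: (posnP i) => [->|i0]; first by rewrite rr0 !inE eqxx.
case: (ltnP i n) => h1.
  by rewrite rr_mid; last lia; rewrite -iterk_neg; try lia; rewrite inKN ?orbT.
case: (eqVneq i n) => [->|h2]; first by rewrite rr_n !inE eqxx ?orbT.
case: (eqVneq i n.+1) => [->|h3].
  by rewrite rr_n1 (_ : - k = iter 0 (@Tn R n) (- k)) // inKN ?orbT.
case: (eqVneq i n.+2) => [->|h4]; first by rewrite rr_n2 !inE eqxx ?orbT.
case: (eqVneq i n.+3) => [->|h5].
  by rewrite rr_n3 (_ : k = iter 0 (@Tn R n) k) // inK ?orbT.
case: (eqVneq i n.+4) => [->|h6]; first by rewrite rr_n4 !inE eqxx ?orbT.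
case: (eqVneq i (2*n+4)%N) => [->|h7]; first by rewrite rr_top !inE eqxx ?orbT.
have -> : i = (2*n+4 - (2*n+4-i))%N by lia.
rewrite rr_midhi; last lia.
by rewrite -iterk; try lia; rewrite inK ?orbT //; lia.
Qed.

Lemma rpts_eq : rpts R n = map rr (iota 0 (2*n+5)).
Proof.
apply: (@irr_sorted_eq _ <%R); first exact: lt_trans.
- by move=> x; rewrite ltxx.
- by rewrite /rpts sort_lt_sorted undup_uniq.
- rewrite sorted_map.
  have P : forall a m, (a + m <= 2*n+4)%N -> path (relpre rr <%R) a (iota a.+1 m).
    move=> a m; elim: m a => [//|m IH] a h /=.
    rewrite rr_step; last lia. by apply: IH; lia.
  have -> : (2*n+5 = (2*n+4).+1)%N by lia.
  by rewrite /= P //; lia.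
- move=> x; rewrite /rpts mem_sort mem_undup.
  apply/idP/idP.
    move/mp_in_rr => [i hi <-]; apply: map_f; rewrite mem_iota; lia.
  by move/mapP => [i]; rewrite mem_iota => hi ->; apply: rr_in_mp; lia.
Qed.

Lemma r_rr i : (i <= 2*n+4)%N -> r R n i = rr i.
Proof.
move=> h; rewrite /r rpts_eq (nth_map 0%N); last by rewrite size_iota; lia.
by rewrite nth_iota //; lia.
Qed.

Lemma img_inc (f : R -> R) (a b al be : R) : 0 < al -> (forall x, a < x < b -> f x = al * x + be) ->
  f @` `]a, b[ = `](al * a + be), (al * b + be)[.
Proof.
move=> hal hf; apply/seteqP; split => [y [x hx <-] | y hy].
  move: hx; rewrite /= !in_itv /= => /andP[h1 h2].
  rewrite hf ?h1 ?h2 //. apply/andP; split; nra.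
move: hy; rewrite /= !in_itv /= => /andP[h1 h2].
exists ((y - be) / al).
  rewrite /= in_itv /=. apply/andP; split.
    by rewrite ltr_pdivlMr //; lra.
  by rewrite ltr_pdivrMr //; lra.
rewrite hf; first by field; lra.
apply/andP; split; [rewrite ltr_pdivlMr // | rewrite ltr_pdivrMr //]; lra.
Qed.

Lemma img_dec (f : R -> R) (a b al be : R) : al < 0 -> (forall x, a < x < b -> f x = al * x + be) ->
  f @` `]a, b[ = `](al * b + be), (al * a + be)[.
Proof.
move=> hal hf.
have -> : f @` `]a, b[ = (fun x => f (- x)) @` `](- b), (- a)[.
  apply/seteqP; split => [y [x hx <-] | y [x hx <-]].
    exists (- x); last by rewrite opprK.
    by move: hx; rewrite /= !in_itv /= => /andP[h1 h2]; apply/andP; split; lra.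
  exists (- x) => //.
  by move: hx; rewrite /= !in_itv /= => /andP[h1 h2]; apply/andP; split; lra.
rewrite (@img_inc _ _ _ (- al) be).
    have -> : - al * - b + be = al * b + be by ring.
    by have -> : - al * - a + be = al * a + be by ring.
  lra.
move=> x /andP[h1 h2]; rewrite hf; first ring.
apply/andP; split; lra.
Qed.

Lemma incl_iff i lo hi : (i < 2*n+4)%N -> (lo <= 2*n+4)%N -> (hi <= 2*n+4)%N ->
  (`](rr i), (rr i.+1)[ `<=` `](rr lo), (rr hi)[) <-> (lo <= i < hi)%N.
Proof.
move=> hi1 hlo hhi; split.
  move=> H.
  have hm : `](rr i), (rr i.+1)[ ((rr i + rr i.+1) / 2).
    have := rr_step hi1 => hs.
    rewrite /= in_itv /=; apply/andP; split; lra.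
  move: (H _ hm); rewrite /= in_itv /= => /andP[h1 h2].
  have hs := rr_step hi1.
  apply/andP; split.
    case: (leqP lo i) => // h.
    have := @rr_le i.+1 lo h hlo; lra.
  case: (ltnP i hi) => // h.
  have := @rr_le hi i h (ltnW hi1); lra.
move=> /andP[h1 h2] x; rewrite /= !in_itv /= => /andP[x1 x2].
have := @rr_le lo i h1 (ltnW hi1); have := @rr_le i.+1 hi h2 hhi => y1 y2.
apply/andP; split; lra.
Qed.

Lemma Rint_rr j : (j < 2*n+4)%N -> @Defs.Rint R n j = `](rr j), (rr j.+1)[.
Proof. by move=> h; rewrite /Defs.Rint !r_rr //; lia. Qed.

Lemma g1 i : (i <= n)%N -> c * rr i + (c - 1) = rr (phi n i).
Proof.
move=> h; rewrite /phi.
case: (posnP i) => [->|i0]; first by rewrite rr0; ring.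
case: (ltnP i n) => h1.
  rewrite rr_ff; last lia. rewrite rr_mid; last lia. rewrite exprS; ring.
have -> : i = n by lia.
by rewrite eqxx rr_n (_ : (n+3)%N = n.+3) ?rr_n3; [lra|lia].
Qed.

Lemma img_lo j : (j <= n.+1)%N -> Tn n @` @Defs.Rint R n j = `](rr (LO n j)), (rr (HI n j))[.
Proof.
move=> hj; rewrite Rint_rr; last lia.
have kp := kpos; have kh := khalf.
rewrite /LO /HI (_ : (j <= n+1)%N = true); last lia.
rewrite /LOh /HIh.
case: (ltnP j n) => h1.
  rewrite (@img_inc _ _ _ c (c - 1)); first by rewrite !g1 //; lia.
    have := c2; lra.
  move=> x /andP[x1 x2]; rewrite TnE T1; first ring.
  have := @rr_le j.+1 n h1 (ltac:(lia)); rewrite rr_n; lra.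
have hff : rr (ff n 1) = c * k - 1 by rewrite rr_ff ?expr1 //; lia.
case: (eqVneq j n) => [->|h2].
  rewrite (@img_dec _ _ _ (- c) (-1)); last first.
      move=> x /andP[x1 x2]; rewrite TnE T2; first ring.
        by move: x1; rewrite rr_n.
      by move: x2; rewrite rr_n1; lra.
    have := c2; lra.
  rewrite hff (_ : (n+3)%N = n.+3) ?rr_n3 ?rr_n1 ?rr_n; last lia.
  have -> : - c * - k + -1 = c * k - 1 by ring.
  by have -> : - c * - (1/2) + -1 = k by lra.
have -> : j = n.+1 by lia.
rewrite (@img_dec _ _ _ (- c) (-1)); last first.
    move=> x /andP[x1 x2]; rewrite TnE T2; first ring.
      by move: x1; rewrite rr_n1; lra.
    by move: x2; rewrite rr_n2.
  have := c2; lra.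
rewrite hff rr0 rr_n1 rr_n2.
have -> : - c * 0 + -1 = -1 by ring.
by have -> : - c * - k + -1 = c * k - 1 by ring.
Qed.

Lemma img_neg (a b u v : R) : Tn n @` `]a, b[ = `]u, v[ ->
  Tn n @` `](- b), (- a)[ = `](- v), (- u)[.
Proof.
move=> H; apply/seteqP; split => [y [x hx <-] | y hy].
  have : `]u, v[ (Tn n (- x)).
    rewrite -H; exists (- x) => //.
    by move: hx; rewrite /= !in_itv /= => /andP[h1 h2]; apply/andP; split; lra.
  rewrite TnE tent_odd -TnE /= !in_itv /= => /andP[h1 h2]; apply/andP; split; lra.
have : `]u, v[ (- y) by move: hy; rewrite /= !in_itv /= => /andP[h1 h2]; apply/andP; split; lra.
rewrite -H => -[x hx hxy]; exists (- x).
  by move: hx; rewrite /= !in_itv /= => /andP[h1 h2]; apply/andP; split; lra.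
by rewrite TnE tent_odd -TnE hxy opprK.
Qed.

Lemma LOHI_le j : (j < 2*n+4)%N -> (LO n j <= 2*n+4)%N /\ (HI n j <= 2*n+4)%N.
Proof. move=> h; split; rewrite /LO /HI /LOh /HIh /phi /ff; repeat (case: ifP => ?); lia. Qed.

Lemma img_all j : (j < 2*n+4)%N -> Tn n @` @Defs.Rint R n j = `](rr (LO n j)), (rr (HI n j))[.
Proof.
move=> hj; case: (leqP j n.+1) => h1; first exact: img_lo.
set j' := (2*n+3 - j)%N.
have hj' : (j' <= n.+1)%N by rewrite /j'; lia.
have := img_lo hj'; rewrite Rint_rr; last lia.
move/img_neg; rewrite Rint_rr //.
have -> : rr j = - rr j'.+1.
  by rewrite -rr_sym; [congr rr; rewrite /j'; lia | rewrite /j'; lia].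
have -> : rr j.+1 = - rr j'.
  by rewrite -rr_sym; [congr rr; rewrite /j'; lia | rewrite /j'; lia].
move=> ->.
have [b1 b2] := LOHI_le (ltac:(lia) : (j' < 2*n+4)%N).
rewrite -!rr_sym //; congr (`] rr _, rr _ [).
  by rewrite /LO /HI /j' (_ : (j <= n+1)%N = false); [|lia]; rewrite (_ : (2*n+3-j <= n+1)%N = true); [|lia].
by rewrite /LO /HI /j' (_ : (j <= n+1)%N = false); [|lia]; rewrite (_ : (2*n+3-j <= n+1)%N = true); [|lia].
Qed.

Lemma An_eq : An R n = Bm n.
Proof.
apply/matrixP => i j; rewrite !mxE; congr (_%:R); congr nat_of_bool.
have hi := ltn_ord i; have hj := ltn_ord j.
have [b1 b2] := LOHI_le hj.
rewrite (img_all hj) Rint_rr //.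
have E := incl_iff hi b1 b2.
by apply/idP/idP => [/asboolP/E | /E/asboolP].
Qed.
End A.

End Ana.

Import Comb Ana.

Theorem lemma6 (R : realType) (n : nat) : (1 <= n)%N ->
  An R n *m (An R n ^+ n.+1 - 2%:R *: An R n ^+ n - 2%:R *: Jn n) = 0.
Proof.
move=> h; rewrite (An_eq R h); exact: B_identity.
Qed.
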